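(* Let $R$ be a ring and $n \geq 3$ an integer. Then the following are equivalent: the direct power $R^n$ is a GSWNC ring; $R^n$ is a GSNC ring; $R$ is strongly nil-clean.
   Context: All rings are associative with identity. An element $a$ of a ring is strongly nil-clean if $a = e + q$ with $e$ idempotent, $q$ nilpotent and $eq = qe$; it is strongly weakly nil-clean if there exist an idempotent $e$ and a nilpotent $q$ with $eq = qe$ such that $a = q + e$ or $a = q - e$. A ring is strongly nil-clean if all its elements are; it is GSNC if every non-invertible element is strongly nil-clean, and GSWNC if every non-invertible element is strongly weakly nil-clean. *)

(* Defs.v *)
From HB Require Import structures.
From mathcomp Require Import all_boot all_order all_algebra.
Set Implicit Arguments. Unset Strict Implicit. Unset Printing Implicit Defensive.
Import GRing.Theory.
Local Open Scope ring_scope.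

(* Rings: associative with identity (pzRingType; the zero ring is allowed). *)
Definition idempotentR (R : pzRingType) (e : R) : Prop := e * e = e.
Definition nilpotentR (R : pzRingType) (q : R) : Prop := exists k : nat, q ^+ k = 0.
Definition invertibleR (R : pzRingType) (x : R) : Prop :=
  exists y : R, x * y = 1 /\ y * x = 1.

Definition strongly_nil_clean_elt (R : pzRingType) (a : R) : Prop :=
  exists e q : R, [/\ idempotentR e, nilpotentR q, e * q = q * e & a = e + q].

Definition strongly_weakly_nil_clean_elt (R : pzRingType) (a : R) : Prop :=
  exists e q : R, [/\ idempotentR e, nilpotentR q, e * q = q * e &
                      a = q + e \/ a = q - e].

Definition strongly_nil_clean (R : pzRingType) : Prop :=
  forall a : R, strongly_nil_clean_elt a.

Definition GSNC (R : pzRingType) : Prop :=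
  forall a : R, ~ invertibleR a -> strongly_nil_clean_elt a.

Definition GSWNC (R : pzRingType) : Prop :=
  forall a : R, ~ invertibleR a -> strongly_weakly_nil_clean_elt a.

Definition direct_power (R : pzRingType) (n : nat) : pzRingType := {ffun 'I_n -> R}.

(* Main.v *)
Require Import Defs.
From mathcomp Require Import all_boot all_order all_algebra.
From mathcomp Require Import zify.
Set Implicit Arguments. Unset Strict Implicit. Unset Printing Implicit Defensive.
Import GRing.Theory.
Local Open Scope ring_scope.

Section Aux.
Variable R : pzRingType.

Lemma nil_ge (x : R) m j : x ^+ m = 0 -> (m <= j)%N -> x ^+ j = 0.
Proof. by move=> hx hmj; rewrite -(subnK hmj) exprD hx mulr0. Qed.

Lemma nilD (x y : R) : GRing.comm x y -> nilpotentR x -> nilpotentR y ->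
  nilpotentR (x + y).
Proof.
move=> cxy [m hm] [k hk]; exists (m + k)%N; rewrite exprDn_comm //.
apply: big1 => i _.
have [lt|ge] := ltnP i k.
  by rewrite (@nil_ge x m) ?mul0r ?mul0rn //; lia.
by rewrite (@nil_ge y k) ?mulr0 ?mul0rn.
Qed.

Lemma nilMl (x y : R) : GRing.comm x y -> nilpotentR y -> nilpotentR (x * y).
Proof. by move=> cxy [k hk]; exists k; rewrite exprMn_comm // hk mulr0. Qed.

Lemma nilMr (x y : R) : GRing.comm x y -> nilpotentR x -> nilpotentR (x * y).
Proof. by move=> cxy [k hk]; exists k; rewrite exprMn_comm // hk mul0r. Qed.

Lemma nilN (x : R) : nilpotentR x -> nilpotentR (- x).
Proof. by move=> [k hk]; exists k; rewrite exprNn hk mulr0. Qed.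

Lemma two_nil (e q : R) : idempotentR e -> nilpotentR q -> e * q = q * e ->
  -1 = q + e -> nilpotentR (2 : R).
Proof.
move=> he hq ceq h.
have ee : e = - (1 + q).
  by rewrite -[LHS](addKr q) -h opprD addrC.
have H0 : (1 + q) * (2 + q) = 0.
  have : e * (e - 1) = 0 by rewrite mulrBr mulr1 he subrr.
  rewrite ee -opprD mulrNN => <-. congr (_ * _).
  by rewrite addrAC.
have H1 : 2 + q * (1 + (2 + q)) = 0.
  by rewrite -H0 mulrDl mul1r mulrDr mulr1 addrA [2 + q]addrC.
have -> : (2 : R) = q * (- (1 + (2 + q))).
  by apply/eqP; rewrite mulrN -addr_eq0 H1.
apply: nilMr => //.
by apply/commrN/commrD; [exact: commr1 | apply/commrD; [apply: commr_nat| by []]].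
Qed.

End Aux.

Section Power.
Variables (R : pzRingType) (n : nat).

Lemma ffunX (f : direct_power R n) k i : (f ^+ k) i = f i ^+ k.
Proof. by elim: k => [|k IH]; rewrite ?expr0 ?ffunE // !exprS ffunE IH. Qed.

Lemma comp_props (e q : direct_power R n) i :
  idempotentR e -> nilpotentR q -> e * q = q * e ->
  [/\ idempotentR (e i), nilpotentR (q i) & e i * q i = q i * e i].
Proof.
move=> he [k hk] ceq; split.
- by have := congr1 (fun g : direct_power R n => g i) he; rewrite /= ffunE.
- by exists k; rewrite -ffunX hk ffunE.
- by have := congr1 (fun g : direct_power R n => g i) ceq; rewrite /= !ffunE.
Qed.

Lemma noninv (f : direct_power R n) i : f i = 0 -> (1 : R) != 0 -> ~ invertibleR f.
Proof.
move=> hi nz [y [h1 _]]; have := congr1 (fun g : direct_power R n => g i) h1.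
by rewrite /= !ffunE hi mul0r => /esym/eqP; rewrite (negbTE nz).
Qed.

Lemma snc_power : strongly_nil_clean R -> strongly_nil_clean (direct_power R n).
Proof.
move=> H a.
have: forall i, exists t : R * R * nat,
    [/\ t.1.1 * t.1.1 = t.1.1, t.1.2 ^+ t.2 = 0, t.1.1 * t.1.2 = t.1.2 * t.1.1
      & a i = t.1.1 + t.1.2].
  move=> i; have [e [q [he [k hk] ceq ha]]] := H (a i).
  by exists (e, q, k).
case/fin_all_exists => u hu.
exists ([ffun i => (u i).1.1] : direct_power R n), ([ffun i => (u i).1.2] : direct_power R n).
split.
- by apply/ffunP => i; rewrite !ffunE; case: (hu i).
- exists (\max_i (u i).2); apply/ffunP => i; rewrite ffunX !ffunE.
  case: (hu i) => _ hk _ _; apply: (nil_ge hk).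
  by apply: (leq_bigmax_cond (F := fun i => (u i).2)).
- by apply/ffunP => i; rewrite !ffunE; case: (hu i).
- by apply/ffunP => i; rewrite !ffunE; case: (hu i).
Qed.

Lemma gswnc_snc : (3 <= n)%N -> GSWNC (direct_power R n) -> strongly_nil_clean R.
Proof.
move=> hn H a.
have [z|nz] := eqVneq (1 : R) 0.
  have -> : a = 0 by rewrite -[a]mulr1 z mulr0.
  exists 0, 0; split; rewrite ?mulr0 ?addr0 //; first by rewrite /idempotentR mulr0.
  by exists 1%N; rewrite expr1.
have h0 : (0 < n)%N by lia.
have h1 : (1 < n)%N by lia.
have h2 : (2 < n)%N by lia.
pose i0 := Ordinal h0; pose i1 := Ordinal h1; pose i2 := Ordinal h2.
pose y : direct_power R n :=
  [ffun i : 'I_n => if val i == 0%N then 1 else if val i == 1%N then -1 else 0].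
have two : nilpotentR (2 : R).
  have yi2 : y i2 = 0 by rewrite ffunE.
  have [e [q [he hq ceq hy]]] := H y (@noninv y i2 yi2 nz).
  case: hy => hy.
    have := congr1 (fun g : direct_power R n => g i1) hy; rewrite /= !ffunE /= => hh.
    by have [he' hq' c'] := comp_props i1 he hq ceq; apply: (two_nil he' hq' c').
  have := congr1 (fun g : direct_power R n => g i0) hy; rewrite /= !ffunE /= => hh.
  have [he' [k hk] c'] := comp_props i0 he hq ceq.
  apply: (@two_nil _ (e i0) (- q i0) he').
  - by exists k; rewrite exprNn hk mulr0.
  - by rewrite mulrN mulNr c'.
  - by rewrite hh opprB addrC.
pose x : direct_power R n := [ffun i : 'I_n => if val i == 0%N then a else 0].
have xi1 : x i1 = 0 by rewrite ffunE.
have [e [q [he hq ceq hx]]] := H x (@noninv x i1 xi1 nz).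
have [he' hq' c'] := comp_props i0 he hq ceq.
case: hx => hx; have := congr1 (fun g : direct_power R n => g i0) hx;
  rewrite /= !ffunE /= => ha.
  by exists (e i0), (q i0); split => //; rewrite addrC.
exists (e i0), (q i0 + - (2 * e i0)); split => //.
- apply: nilD => //.
    by apply/commrN/commrM; [apply: commr_nat | exact: esym c'].
  by apply/nilN/nilMr => //; exact: esym (commr_nat _ _).
- by apply: commrD => //; apply: commrN; apply: commrM; [apply: commr_nat|].
- by rewrite ha mulr_natl mulr2n opprD addrCA addNKr.
Qed.

End Power.

Theorem corollary2p8 (R : pzRingType) (n : nat) (hn : (3 <= n)%N) :
  (GSWNC (direct_power R n) <-> GSNC (direct_power R n)) /\
  (GSNC (direct_power R n) <-> strongly_nil_clean R).
Proof.
have gsnc_gswnc : GSNC (direct_power R n) -> GSWNC (direct_power R n).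
  move=> H a ha; have [e [q [he hq ceq ->]]] := H a ha.
  by exists e, q; split => //; left; rewrite addrC.
have snc_gsnc : strongly_nil_clean R -> GSNC (direct_power R n).
  by move=> H a _; apply: snc_power.
split; split => //.
- by move=> H; apply/snc_gsnc/(gswnc_snc hn).
- by move=> H; apply/(gswnc_snc hn)/gsnc_gswnc.
Qed.
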